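(* Let $p=2n+1$ be an odd prime, and write $\{1,\ldots,p-1\}=\{a_1,\ldots,a_n\}\cup\{b_1,\ldots,b_n\}$ with $a_1<\cdots<a_n$ and $b_1<\cdots<b_n$, where $a_1,\ldots,a_n$ are the quadratic residues modulo $p$ and $b_1,\ldots,b_n$ are the quadratic nonresidues modulo $p$ in $\{1,\ldots,p-1\}$. Then $$\prod_{1\le j<k\le n}(a_k-a_j)(b_k-b_j)\equiv\begin{cases}-n!\pmod p&\text{if } p\equiv1\pmod4,\\1\pmod p&\text{if } p\equiv3\pmod4.\end{cases}$$ *)

(* Defs.v *)
From mathcomp Require Import all_boot all_order all_algebra.
Set Implicit Arguments. Unset Strict Implicit. Unset Printing Implicit Defensive.
Import GRing.Theory Num.Theory.

Definition is_qr (p a : nat) : bool := [exists x : 'I_p, x ^ 2 == a %[mod p]].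

Definition qres (p : nat) : seq nat := [seq a <- iota 1 p.-1 | is_qr p a].
Definition qnres (p : nat) : seq nat := [seq a <- iota 1 p.-1 | ~~ is_qr p a].

(* Main.v *)
Require Import Defs.
From mathcomp Require Import all_boot all_order all_algebra.
From mathcomp Require Import finfield zify ring.
Import GRing.Theory Num.Theory.
Local Open Scope ring_scope.


Section Gen.
Variable R : comNzRingType.

Fixpoint vd (s : seq nat) : R :=
  if s is x :: s' then (\prod_(y <- s') (y%:R - x%:R)) * vd s' else 1.

Lemma vdE s : vd s = \prod_(k < size s) \prod_(j < k) ((nth 0%N s k)%:R - (nth 0%N s j)%:R).
Proof.
elim: s => [|x s IH] /=; first by rewrite big_ord0.
rewrite (@big_ord_recl _ _ _ (size s)) big_ord0 mul1r.
rewrite IH (big_nth 0%N) big_mkord -big_split /=; apply: eq_bigr => k _.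
rewrite /bump /= add1n add0n.
by rewrite big_ord_recl.
Qed.

Fixpoint cr (P : pred nat) (s : seq nat) : R :=
  if s is x :: s' then
    (if P x then \prod_(y <- s' | ~~ P y) (y%:R - x%:R)
     else \prod_(y <- s' | P y) (y%:R - x%:R)) * cr P s'
  else 1.

Lemma vd_filter P s :
  vd s = vd [seq y <- s | P y] * vd [seq y <- s | ~~ P y] * cr P s.
Proof.
elim: s => [|x s IH] /=; first by rewrite !mul1r.
rewrite IH (bigID P) /=.
case: (P x) => /=; rewrite !big_filter; ring.
Qed.

Lemma prod_opp (P : pred nat) (f : nat -> R) s :
  \prod_(y <- s | P y) (- f y) = (-1) ^+ (count P s) * \prod_(y <- s | P y) f y.
Proof.
elim: s => [|x s IH] /=; first by rewrite !big_nil expr0 mulr1.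
rewrite !big_cons IH; case: (P x) => /=; last by rewrite add0n.
by rewrite exprS; ring.
Qed.

Fixpoint Mc (P : pred nat) (s : seq nat) : nat :=
  if s is x :: s' then ((if P x then 0 else count P s') + Mc P s')%N else 0%N.

Lemma cr_sign P s :
  cr P s = (-1) ^+ (Mc P s) *
    \prod_(x <- s | P x) \prod_(y <- s | ~~ P y) (y%:R - x%:R).
Proof.
elim: s => [|x s IH] /=; first by rewrite big_nil mulr1.
rewrite IH big_cons; case Px: (P x) => /=.
  rewrite big_cons Px /= add0n.
  under [X in _ = _ * (_ * X)]eq_bigr => i _ do rewrite big_cons Px /=.
  ring.
rewrite exprD.
under [X in _ = _ * X]eq_bigr => i _ do rewrite big_cons Px /=.
rewrite big_split /=.
have -> : \prod_(y <- s | P y) (y%:R - x%:R) = (-1) ^+ count P s * \prod_(y <- s | P y) (x%:R - y%:R :R).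
  rewrite -prod_opp; apply: eq_bigr => i _; by rewrite opprB.
ring.
Qed.

Lemma Mc_sum P s : (Mc P s + Mc (fun y => ~~ P y) s = count P s * count (fun y => ~~ P y) s)%N.
Proof.
elim: s => [|x s IH] //=.
case: (P x) => /=; lia.
Qed.

Lemma Mc_rcons P s x : Mc P (rcons s x) = (Mc P s + (if P x then count (fun y => ~~ P y) s else 0))%N.
Proof.
elim: s => [|y s IH] /=; first by case: (P x).
rewrite IH -cats1 count_cat /= addn0; case: (P x); case: (P y) => /=; lia.
Qed.

Lemma Mc_rev P s : Mc P (rev s) = Mc (fun y => ~~ P y) s.
Proof.
elim: s => [|x s IH] //=.
rewrite rev_cons Mc_rcons IH count_rev; case: (P x) => /=; lia.
Qed.

Lemma Mc_map P f s : Mc P (map f s) = Mc (fun y => P (f y)) s.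
Proof.
elim: s => [|x s IH] //=.
by rewrite IH count_map.
Qed.

Lemma Mc_eq_in P Q s : {in s, P =1 Q} -> Mc P s = Mc Q s.
Proof.
elim: s => [|x s IH] //= H.
rewrite IH; last by move=> y ys; apply: H; rewrite inE ys orbT.
rewrite H ?inE ?eqxx // (eq_in_count (a2 := Q)) //.
by move=> y ys; apply: H; rewrite inE ys orbT.
Qed.

Lemma vd_rcons s x : vd (rcons s x) = vd s * \prod_(y <- s) (x%:R - y%:R).
Proof.
elim: s => [|z s IH] /=; first by rewrite big_nil big_nil !mul1r.
rewrite IH big_rcons /= big_cons; ring.
Qed.

Lemma vd_revmap (f : nat -> nat) t :
  {in t &, forall x y, (f x)%:R - (f y)%:R = y%:R - x%:R :> R} ->
  vd (map f (rev t)) = vd t.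
Proof.
elim: t => [|x t IH] //= H.
rewrite rev_cons map_rcons vd_rcons IH; last first.
  by move=> a b ha hb; apply: H; rewrite inE ?ha ?hb orbT.
rewrite mulrC; congr (_ * _).
rewrite big_map big_rev big_seq_cond [RHS]big_seq_cond; apply: eq_bigr => y /andP [yt _].
by apply: H; rewrite inE ?yt ?eqxx ?orbT.
Qed.

End Gen.


Section Fp.
Variables (p n : nat).
Hypothesis hp : prime p.
Hypothesis hpn : p = (2 * n + 1)%N.
Local Notation F := 'F_p.

Lemma n_gt0 : (0 < n)%N.
Proof. by move: hp; rewrite hpn; case: n. Qed.

Lemma natF0 x : ((x%:R : F) == 0) = (p %| x)%N.
Proof. by rewrite (dvdn_pcharf (pchar_Fp hp)). Qed.

Lemma natF_inj x y : (x < p)%N -> (y < p)%N -> (x%:R : F) = y%:R -> x = y.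
Proof.
wlog le: x y / (x <= y)%N.
  move=> W hx hy e; case: (leqP x y) => h; first exact: W.
  by apply/esym/W => //; apply: ltnW.
move=> hx hy e.
have : (p %| y - x)%N by rewrite -natF0 natrB // e subrr.
case E: (y - x)%N => [|k] d; first lia.
move: d => /dvdn_leq; lia.
Qed.

Lemma two_neq0 : (2 : F) != 0.
Proof. rewrite natF0; apply/negP => /dvdn_leq; have := n_gt0; rewrite hpn; lia. Qed.

Lemma m1_neq1 : (-1 : F) != 1.
Proof. by rewrite -subr_eq0 -opprD oppr_eq0 (_ : 1 + 1 = 2) ?two_neq0. Qed.

Lemma fermat (x : F) : x != 0 -> x ^+ (2 * n) = 1.
Proof.
move=> x0; have e := expf_card x.
have ep : #|F| = (2*n).+1 by rewrite card_Fp // hpn addn1.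
move: e; rewrite ep exprS.
move=> /(congr1 (fun y => y / x)); rewrite mulrC mulrA mulVf // mul1r divff //.
Qed.


Lemma prod_const_seq (T : Type) (r : seq T) (c : F) : \prod_(i <- r) c = c ^+ size r.
Proof. elim: r => [|x r IH]; by rewrite ?big_nil ?big_cons ?IH ?exprS. Qed.

Local Notation s := (iota 1 p.-1).
Local Notation Q := (qres p).
Local Notation N := (qnres p).

Lemma mem_s a : (a \in s) = (0 < a < p)%N.
Proof. rewrite mem_iota hpn /=; lia. Qed.

Lemma natF_neq0 {a} : (0 < a < p)%N -> (a%:R : F) != 0.
Proof. move=> /andP [h1 h2]; rewrite natF0; apply/negP => /dvdn_leq; lia. Qed.

Lemma qr_pow a : (0 < a < p)%N -> is_qr p a -> (a%:R : F) ^+ n = 1.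
Proof.
move=> ha /existsP [x /eqP e].
have ea : (a%:R : F) = (x%:R) ^+ 2 by rewrite -Fp_nat_mod // -e Fp_nat_mod // natrX.
have x0 : (x%:R : F) != 0.
  by apply/eqP => h; move: (natF_neq0 (a:=a) ha); rewrite ea h expr0n eqxx.
by rewrite ea -exprM fermat.
Qed.

Definition rts (l : seq nat) : seq F := map (fun a => a%:R) l.

Lemma uniq_rts l : uniq l -> all (fun a => a < p)%N l -> uniq (rts l).
Proof.
move=> u /allP al; rewrite map_inj_in_uniq // => x y hx hy.
by apply: natF_inj; apply: al.
Qed.

Lemma Q_mem a : a \in Q = (a \in s) && is_qr p a.
Proof. by rewrite mem_filter andbC. Qed.

Lemma N_mem a : a \in N = (a \in s) && ~~ is_qr p a.
Proof. by rewrite mem_filter andbC. Qed.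

Lemma uniq_Q : uniq Q.
Proof. by rewrite filter_uniq // iota_uniq. Qed.

Lemma uniq_N : uniq N.
Proof. by rewrite filter_uniq // iota_uniq. Qed.

Lemma all_lt l : {subset l <= s} -> all (fun a => a < p)%N l.
Proof. by move=> h; apply/allP => a /h; rewrite mem_s => /andP []. Qed.

Lemma XnsubC_neq0 (c : F) : 'X^n - c%:P != 0.
Proof. by rewrite -size_poly_eq0 size_XnsubC // n_gt0. Qed.

Lemma size_Q_le : (size Q <= n)%N.
Proof.
have := @max_poly_roots _ ('X^n - 1%:P) (rts Q) (XnsubC_neq0 1).
rewrite size_XnsubC ?n_gt0 // size_map ltnS; apply.
  apply/allP => _ /mapP [a aQ ->]; rewrite /root !hornerE.
  by move: aQ; rewrite Q_mem => /andP [ha aq]; rewrite qr_pow ?subrr // -mem_s.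
by apply: uniq_rts; [apply: uniq_Q | apply: all_lt => a; rewrite Q_mem => /andP []].
Qed.


Lemma size_Q_ge : (n <= size Q)%N.
Proof.
have -> : n = size (map (fun y => y ^ 2 %% p)%N (iota 1 n)) by rewrite size_map size_iota.
apply: uniq_leq_size.
  rewrite map_inj_in_uniq ?iota_uniq // => y z; rewrite !mem_iota => hy hz e.
  have : ((y%:R : F) - z%:R) * (y%:R + z%:R) = 0.
    rewrite -subr_sqr -!natrX -(Fp_nat_mod hp (y ^ 2)) -(Fp_nat_mod hp (z ^ 2)) e.
    by rewrite subrr.
  move/eqP; rewrite mulf_eq0 => /orP [|].
    by rewrite subr_eq0 => /eqP /natF_inj; apply; rewrite hpn; lia.
  rewrite -natrD natF0 => /dvdn_leq; rewrite hpn; lia.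
move=> b /mapP [y]; rewrite mem_iota => hy ->.
have y0 : (y%:R : F) != 0 by apply: natF_neq0; rewrite hpn; lia.
rewrite Q_mem mem_s (ltn_pmod _ (prime_gt0 hp)) andbT; apply/andP; split.
  rewrite lt0n; apply/negP => /eqP h.
  have : ((y ^ 2)%N%:R : F) == 0 by rewrite natF0; apply/eqP.
  by rewrite natrX expf_eq0 (negbTE y0) andbF.
apply/existsP; have yp : (y < p)%N by rewrite hpn; lia.
by exists (Ordinal yp); rewrite /= modn_mod.
Qed.

Lemma size_Q : size Q = n.
Proof. by apply/eqP; rewrite eqn_leq size_Q_le size_Q_ge. Qed.

Lemma size_N : size N = n.
Proof.
have := count_predC (is_qr p) s.
rewrite size_iota -!size_filter size_Q => h.
have h2 : (n + size N = p.-1)%N := h.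
move: h2; rewrite hpn addn1 /=; lia.
Qed.

Lemma nr_pow a : a \in N -> (a%:R : F) ^+ n = -1.
Proof.
rewrite N_mem => /andP [ha nq].
have a0 : (a%:R : F) != 0 by apply: natF_neq0; rewrite -mem_s.
have : ((a%:R : F) ^+ n - 1) * ((a%:R : F) ^+ n + 1) = 0.
  by rewrite -subr_sqr -exprM mulnC fermat // expr1n subrr.
move/eqP; rewrite mulf_eq0 => /orP [|]; last by rewrite addr_eq0 => /eqP.
rewrite subr_eq0 => /eqP e1; exfalso.
have := @max_poly_roots _ ('X^n - 1%:P) (rts (a :: Q)) (XnsubC_neq0 1).
rewrite size_XnsubC ?n_gt0 // size_map [size (a :: Q)]/= size_Q ltnn => H; suff: false by []; apply: H.
  apply/allP => _ /mapP [b bQ ->]; rewrite /root !hornerE.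
  move: bQ; rewrite inE => /orP [/eqP -> | ]; first by rewrite e1 subrr.
  by rewrite Q_mem => /andP [hb bq]; rewrite qr_pow ?subrr // -mem_s.
apply: uniq_rts; first by rewrite /= uniq_Q andbT Q_mem (negbTE nq) andbF.
apply: all_lt => b; rewrite inE => /orP [/eqP -> //|]; by rewrite Q_mem => /andP [].
Qed.

Lemma qr_iff a : a \in s -> is_qr p a = ((a%:R : F) ^+ n == 1).
Proof.
move=> ha; case q: (is_qr p a).
  by rewrite qr_pow ?eqxx // -mem_s.
rewrite nr_pow ?N_mem ?ha ?q //; apply/esym/negbTE; exact: m1_neq1.
Qed.

Lemma prod_N (x : F) : \prod_(y <- N) (x - y%:R) = x ^+ n + 1.
Proof.
have := @all_roots_prod_XsubC _ ('X^n - (-1)%:P) (rts N).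
rewrite size_XnsubC ?n_gt0 // size_map size_N lead_coefXnsubC ?n_gt0 // scale1r.
move=> /(_ erefl); rewrite uniq_rootsE.
have r : all (root ('X^n - (-1)%:P)) (rts N).
  by apply/allP => _ /mapP [b bN ->]; rewrite /root !hornerE nr_pow // subrr.
have u : uniq (rts N).
  by apply: uniq_rts; [apply: uniq_N | apply: all_lt => b; rewrite N_mem => /andP []].
move=> /(_ r u) /(congr1 (fun P => P.[x])).
rewrite horner_prod big_map !hornerE opprK => ->; apply: eq_bigr => y _.
by rewrite hornerXsubC.
Qed.

Lemma prod_QN : \prod_(x <- Q) \prod_(y <- N) ((y%:R : F) - x%:R) = ((-1) ^+ n * 2) ^+ n.
Proof.
rewrite -[in RHS]size_Q -prod_const_seq big_seq [RHS]big_seq; apply: eq_bigr => x xQ.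
have -> : \prod_(y <- N) ((y%:R : F) - x%:R) = \prod_(y <- N | predT y) - ((x%:R : F) - y%:R).
  by apply: eq_bigr => y _; rewrite opprB.
rewrite prod_opp count_predT size_N prod_N qr_pow; last by move: xQ; rewrite Q_mem => /andP [].
  by rewrite size_Q.
by move: xQ; rewrite Q_mem mem_s => /andP [].
Qed.


Lemma prod_fact k : \prod_(j < k) (((k - j)%N)%:R : F) = (k`!)%:R.
Proof. by rewrite -ffactnn ffact_prod natr_prod. Qed.

Lemma V_eq : vd F s = \prod_(k < 2 * n) (k`!)%:R.
Proof.
rewrite vdE size_iota (_ : p.-1 = 2 * n)%N; last by rewrite hpn addn1.
apply: eq_bigr => k _; rewrite -prod_fact; apply: eq_bigr => j _.
have jk : (j < k)%N := ltn_ord j.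
have k2 : (k < 2 * n)%N := ltn_ord k.
rewrite !nth_iota ?hpn ?addn1 //=; last by lia.
by rewrite -natrB ?leq_add2l 1?ltnW // subnDl.
Qed.

Lemma wilsonF : (((2 * n)`!)%:R : F) = -1.
Proof.
apply/eqP; rewrite -subr_eq0 opprK natr1 natF0.
have e : p.-1 = (2 * n)%N by rewrite hpn addn1.
by rewrite -e -Wilson ?prime_gt1.
Qed.

Lemma compl {j} : (j < 2 * n)%N -> (((2 * n - j)%N)%:R : F) = - (j.+1)%:R.
Proof.
move=> h; apply/eqP; rewrite -subr_eq0 opprK -natrD natF0.
by rewrite (_ : (2 * n - j + j.+1 = p)%N) ?dvdnn // hpn; lia.
Qed.

Lemma W j : (j <= 2 * n)%N -> (((2 * n - j)`!)%:R : F) * (j`!)%:R = (-1) ^+ j.+1.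
Proof.
elim: j => [|j IH] h; first by rewrite subn0 fact0 mulr1 wilsonF expr1.
have h' : (j < 2 * n)%N by lia.
move: (IH (ltnW h')).
have -> : (2 * n - j = (2 * n - j.+1).+1)%N by lia.
have c : ((((2 * n - j.+1).+1)%N)%:R : F) = - (j.+1)%:R.
  by rewrite (_ : ((2 * n - j.+1).+1 = 2 * n - j)%N) ?compl //; lia.
rewrite factS natrM c => e.
rewrite factS natrM exprS -e; ring.
Qed.

Lemma fact_prodF k : ((k`!)%:R : F) = \prod_(i < k) (i.+1)%:R.
Proof. elim: k => [|k IH]; first by rewrite big_ord0. by rewrite factS natrM big_ord_recr /= IH mulrC. Qed.

Lemma Vn : vd F s * (n`!)%:R = \prod_(k < n) (-1) ^+ k.
Proof.
rewrite V_eq -(big_mkord xpredT (fun k => ((k`!)%:R : F))) (@big_cat_nat _ _ _ n) //=; last by lia.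
rewrite [X in _ * X * _]big_rev_mkord big_mkord fact_prodF.
rewrite (_ : (2 * n - n = n)%N); last by lia.
rewrite -!big_split /=.
apply: eq_bigr => k _.
have kn : (k < n)%N := ltn_ord k.
have hk : (k <= 2 * n)%N by lia.
have := W k hk.
rewrite (_ : (2 * n - k = (2 * n - k.+1).+1)%N); last by lia.
have c : ((((2 * n - k.+1).+1)%N)%:R : F) = - (k.+1)%:R.
  by rewrite (_ : ((2 * n - k.+1).+1 = 2 * n - k)%N) ?compl //; lia.
rewrite factS natrM c => e.
have -> : ((-1 : F) ^+ k) = - (-1) ^+ k.+1 by rewrite exprS mulN1r opprK.
rewrite -e; move: (k`!%:R : F) ((2 * n - k.+1)`!%:R : F) ((k.+1)%:R : F) => a b c'; ring.
Qed.

Lemma fact2 m : ((2 * m)`! = \prod_(k < m) ((2 * k).+1 * (2 * k).+2))%N.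
Proof.
elim: m => [|m IH]; first by rewrite big_ord0.
by rewrite big_ord_recr /= -IH mulnS !factS; ring.
Qed.

Lemma sign_half m : \prod_(k < 2 * m) ((-1 : F) ^+ k) = (-1) ^+ m.
Proof.
elim: m => [|m IH]; first by rewrite big_ord0.
rewrite (_ : (2 * m.+1 = (2 * m).+2)%N); last by lia.
rewrite !big_ord_recr /= IH.
have e : ((-1 : F) ^+ (2 * m)) = 1 by rewrite mulnC exprM sqrr_sign.
rewrite exprS e exprS; move: ((-1 : F) ^+ m) => z; ring.
Qed.

Lemma prod_const_ord k (c : F) : \prod_(i < k) c = c ^+ k.
Proof. elim: k => [|k IH]; by rewrite ?big_ord0 ?big_ord_recr ?IH ?exprSr. Qed.

Lemma gauss2 m : n = (2 * m)%N -> (2 : F) ^+ n * (n`!)%:R = (-1) ^+ m * (n`!)%:R.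
Proof.
move=> nm.
have L : (2 : F) ^+ n * (n`!)%:R = \prod_(0 <= i < 2 * m) ((2 * i.+1)%N%:R).
  rewrite fact_prodF -prod_const_ord -big_split big_mkord nm.
  by apply: eq_bigr => i _; rewrite natrM.
rewrite L (@big_cat_nat _ _ _ m) //=; last by lia.
rewrite [X in _ * X = _]big_rev_mkord (_ : (2 * m - m = m)%N); last by lia.
have E : \prod_(k < m) ((2 * (2 * m - k.+1).+1)%N%:R : F) = \prod_(k < m) ((-1) * ((2 * k).+1)%:R).
  apply: eq_bigr => k _; have km : (k < m)%N := ltn_ord k.
  rewrite mulN1r; apply/eqP; rewrite -subr_eq0 opprK -natrD natF0.
  by rewrite (_ : (2 * (2 * m - k.+1).+1 + (2 * k).+1 = p)%N) ?dvdnn // hpn nm; lia.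
rewrite E big_split /= prod_const_ord nm fact2 natr_prod big_mkord.
rewrite mulrCA; congr (_ * _); rewrite -big_split /=; apply: eq_bigr => k _.
rewrite [RHS]natrM mulrC; congr (_ * _); congr (_%:R); lia.
Qed.


Local Notation f := (fun y => p - y)%N.

Lemma map_s : map f s = rev s.
Proof.
apply: (@eq_from_nth _ 0%N); first by rewrite size_map size_rev.
move=> i; rewrite size_map size_iota => hi.
rewrite (nth_map 0%N) ?size_iota // nth_rev ?size_iota // !nth_iota //; last by lia.
have : (0 < p.-1)%N by rewrite hpn addn1 /= muln_gt0 n_gt0.
rewrite hpn addn1 /= in hi *; lia.
Qed.

Lemma s_sym : map f (rev s) = s.
Proof. by rewrite map_rev map_s revK. Qed.

Lemma negF y : y \in s -> (((p - y)%N)%:R : F) = - y%:R.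
Proof.
by rewrite mem_s => /andP [_ h]; rewrite natrB ?(ltnW h) // pchar_Fp_0 // sub0r.
Qed.

Lemma f_in_s y : y \in s -> (p - y)%N \in s.
Proof. rewrite !mem_s; lia. Qed.

Lemma qr_refl_even : ~~ odd n -> {in s, forall y, is_qr p (p - y) = is_qr p y}.
Proof.
move=> ev y ys; rewrite !qr_iff ?f_in_s // negF // exprNn -signr_odd (negbTE ev).
by rewrite expr0 mul1r.
Qed.

Lemma qr_refl_odd : odd n -> {in s, forall y, is_qr p (p - y) = ~~ is_qr p y}.
Proof.
move=> od y ys; rewrite qr_iff ?f_in_s // negF // exprNn -signr_odd od expr1 mulN1r.
case q: (is_qr p y).
  rewrite qr_pow ?q -?mem_s //; exact/negbTE/m1_neq1.
rewrite nr_pow ?N_mem ?ys ?q // opprK eqxx //.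
Qed.

Lemma Mc_even : ~~ odd n -> ~~ odd (Mc (is_qr p) s).
Proof.
move=> ev.
have e1 : Mc (is_qr p) s = Mc (fun y => ~~ is_qr p y) s.
  rewrite -{1}s_sym Mc_map (@Mc_eq_in _ (is_qr p)) ?Mc_rev //.
  by move=> y; rewrite mem_rev => ys; rewrite qr_refl_even.
have e2 := Mc_sum (is_qr p) s.
rewrite -!size_filter -/(qres p) size_Q in e2.
have e3 : size [seq y <- s | ~~ is_qr p y] = n := size_N.
rewrite e3 -e1 in e2.
have := odd_double_half n; rewrite (negbTE ev) add0n => nm.
set m := n./2 in nm.
have -> : Mc (is_qr p) s = (2 * (m * m))%N by rewrite -nm -mul2n in e2; nia.
by rewrite oddM.
Qed.


Lemma KI : vd F s = vd F Q * vd F N * ((-1) ^+ Mc (is_qr p) s * ((-1) ^+ n * 2) ^+ n).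
Proof.
rewrite (vd_filter _ (is_qr p)) cr_sign -prod_QN -big_filter.
congr (_ * (_ * _)); apply: eq_bigr => x _; by rewrite -big_filter.
Qed.

Lemma fact_sq : ((n`!)%:R : F) * (n`!)%:R = (-1) ^+ n.+1.
Proof.
have hn : (n <= 2 * n)%N by lia.
have := W n hn; rewrite (_ : (2 * n - n = n)%N) //; lia.
Qed.

Lemma main_F : vd F Q * vd F N = (if ~~ odd n then - (n`!)%:R else 1).
Proof.
have ki := KI; have vn := Vn; have fs := fact_sq.
case: (boolP (odd n)) => hn /=.
  have eN : N = map f (rev Q).
    rewrite /qnres -{1}s_sym filter_map.
    rewrite (@eq_in_filter _ _ (is_qr p)) ?filter_rev //.
    by move=> y; rewrite mem_rev => ys /=; rewrite qr_refl_odd // negbK.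
  have AB : vd F N = vd F Q.
    rewrite eN vd_revmap // => x y; rewrite !Q_mem => /andP [xs _] /andP [ys _].
    by rewrite !negF // opprK addrC.
  rewrite AB.
  set A := vd F Q.
  have sq : (A * A) ^+ 2 = 1.
    have D2 : (((-1) ^+ n * 2) ^+ n) ^+ 2 = 1 :> F.
      rewrite -exprM mulnC fermat // mulf_neq0 ?two_neq0 // signr_eq0 //.
    have V2 : (vd F s) ^+ 2 = 1.
      have h : (vd F s * (n`!)%:R) ^+ 2 = 1 by rewrite vn prodrXr sqrr_sign.
      by move: h; rewrite exprMn (expr2 (n`!%:R)) fs -signr_odd /= hn expr0 mulr1.
    move: D2 V2; rewrite ki AB -/A.
    move: ((-1 : F) ^+ Mc (is_qr p) s) (((-1 : F) ^+ n * 2) ^+ n) (sqrr_sign F (Mc (is_qr p) s)) => u d uu D2 V2.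
    rewrite -V2 [RHS]exprMn [X in _ = _ * X]exprMn uu D2 !mulr1 //.
  have : (A * A - 1) * (A * A + 1) = 0 by rewrite -subr_sqr sq expr1n subrr.
  move/eqP; rewrite mulf_eq0 => /orP [|]; first by rewrite subr_eq0 => /eqP.
  rewrite addr_eq0 => /eqP h; exfalso.
  have A0 : A != 0 by apply/eqP => a0; move: h; rewrite a0 mul0r => /eqP; rewrite eq_sym oppr_eq0 oner_eq0.
  have := (@fermat A A0); rewrite exprM expr2 h -signr_odd hn expr1 => /eqP.
  by rewrite (negbTE m1_neq1).
have := odd_double_half n; rewrite (negbTE hn) add0n => nm.
set m := n./2 in nm; symmetry in nm; rewrite -mul2n in nm.
have g := @gauss2 m nm.
have sh := sign_half m; rewrite -nm in sh.
rewrite sh in vn.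
have ev := negbTE (Mc_even hn).
rewrite -signr_odd in ki. rewrite ev /= expr0 mul1r in ki.
rewrite -signr_odd in ki. rewrite (negbTE hn) /= expr0 mul1r in ki.
rewrite exprS -signr_odd (negbTE hn) /= expr0 mulr1 in fs.
move: vn g fs; rewrite ki.
move: (vd F Q * vd F N) ((2 : F) ^+ n) ((n`!)%:R : F) ((-1 : F) ^+ m) (sqrr_sign F m) => x t f' u uu vn g fs.
have e : x * (u * f') = u by rewrite -g mulrA.
have xf : x * f' = 1.
  transitivity (u * u * (x * f')); first by rewrite -expr2 uu mul1r.
  transitivity (u * (x * (u * f'))); first by ring.
  by rewrite e -expr2 uu.
transitivity (- (x * (f' * f'))); first by rewrite fs mulrN1 opprK.
by rewrite mulrA xf mul1r.
Qed.

End Fp.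


Lemma vd_intr (R : comNzRingType) s : (vd int s)%:~R = vd R s :> R.
Proof.
elim: s => [|x s IH] /=; first by rewrite rmorph1.
rewrite rmorphM rmorph_prod /= IH; congr (_ * _); apply: eq_bigr => y _.
by rewrite rmorphB !rmorph_nat.
Qed.

Theorem corollary3p1 (p n : nat) (hp : prime p) (hpn : p = (2 * n + 1)%N) :
  let a := fun i : nat => (nth 0%N (qres p) i)%:Z in
  let b := fun i : nat => (nth 0%N (qnres p) i)%:Z in
  ((\prod_(k < n) \prod_(j < k) ((a k - a j) * (b k - b j)))
    = (if p %% 4 == 1 then - (n`!)%:Z else 1) %[mod p])%Z.
Proof.
move=> a b.
have sQ := @size_Q p n hp hpn; have sN := @size_N p n hp hpn.
have E : \prod_(k < n) \prod_(j < k) ((a k - a j) * (b k - b j)) = vd int (qres p) * vd int (qnres p).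
  rewrite !vdE sQ sN -big_split; apply: eq_bigr => k _; rewrite -big_split; apply: eq_bigr => j _.
  by rewrite /a /b !natz.
have h4 : (p %% 4 == 1)%N = ~~ odd n.
  rewrite hpn; have := odd_double_half n; case: (odd n) => /= e; apply/eqP; lia.
have h4z : ((p%:Z %% 4%:R)%Z == 1) = ~~ odd n by rewrite natz modz_nat eqz_nat h4.
rewrite E h4z; apply/eqP; rewrite eqz_mod_dvd (dvdz_pcharf (pchar_Fp hp)) rmorphB rmorphM /=.
rewrite !vd_intr subr_eq0 (@main_F p n hp hpn); case: ifP => _; last by rewrite rmorph1.
by rewrite rmorphN /= -natz rmorph_nat.
Qed.
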